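(* For all integers $k,t\geq 2$: $\mathrm{sat}^{\star}([t]^n,C_k)\leq 2^{k-2}$, and $\mathrm{sat}^{\star}([t]^n,A_k)=\Theta(n)$ (as $n\to\infty$ with $k,t$ fixed).
   Context: For positive integers $n,t$, $[n]=\{1,\dots,n\}$ and the hypergrid $[t]^n$ is the set of functions $f:[n]\to[t]$, partially ordered by $f\leq g$ iff $f(i)\leq g(i)$ for all $i\in[n]$. An induced copy of a poset $P$ in a family $\mathcal{F}\subseteq[t]^n$ is an injective map $\phi:P\to\mathcal{F}$ such that $\phi(x)\leq\phi(y)$ iff $x\leq_P y$. A family $\mathcal{F}\subseteq[t]^n$ is induced $P$-free if it contains no induced copy of $P$; it is induced $P$-saturated if it is induced $P$-free and for every $f\in[t]^n\setminus\mathcal{F}$ the family $\mathcal{F}\cup\{f\}$ contains an induced copy of $P$. Whenever $P$ embeds as an induced subposet of $[t]^n$, $\mathrm{sat}^{\star}([t]^n,P)$ denotes the minimum size of an induced $P$-saturated family in $[t]^n$. $C_k$ denotes the chain on $k$ elements and $A_k$ the antichain on $k$ elements. *)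

(* Defs.v *)
From mathcomp Require Import all_boot.
Set Implicit Arguments. Unset Strict Implicit. Unset Printing Implicit Defensive.

(* The hypergrid [t]^n: functions [n] -> [t], encoded as {ffun 'I_n -> 'I_t}
   (value j : 'I_t stands for j+1 in [t] = {1,...,t}). *)
Definition grid (n t : nat) := {ffun 'I_n -> 'I_t}.

Definition grid_le n t (f g : grid n t) : bool := [forall i, f i <= g i].

Definition induced_copy n t (P : finType) (leP : rel P)
    (F : {set grid n t}) (phi : P -> grid n t) : Prop :=
  injective phi /\ (forall x, phi x \in F) /\
  (forall x y, grid_le (phi x) (phi y) = leP x y).

Definition induced_free n t (P : finType) (leP : rel P) (F : {set grid n t}) :=
  forall phi, ~ induced_copy leP F phi.

Definition induced_saturated n t (P : finType) (leP : rel P)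
    (F : {set grid n t}) :=
  induced_free leP F /\
  (forall f : grid n t, f \notin F ->
     exists phi, induced_copy leP (f |: F) phi).

(* P embeds as an induced subposet of [t]^n (so that sat* is defined). *)
Definition embeds n t (P : finType) (leP : rel P) :=
  exists phi, induced_copy leP [set: grid n t] phi.

Definition chain_rel (k : nat) : rel 'I_k := fun x y => x <= y.
Definition antichain_rel (k : nat) : rel 'I_k := fun x y => x == y.
Arguments chain_rel : clear implicits.
Arguments antichain_rel : clear implicits.

(* Main.v *)
Require Import Defs.
From mathcomp Require Import all_boot.
From mathcomp Require Import zify.
Set Implicit Arguments. Unset Strict Implicit. Unset Printing Implicit Defensive.

Definition rk n t (x : grid n t) : nat := \sum_i (x i : nat).
Definition glt n t (x y : grid n t) : bool := grid_le x y && (x != y).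

Lemma gleP n t (x y : grid n t) : reflect (forall i, x i <= y i) (grid_le x y).
Proof. exact: forallP. Qed.

Lemma gle_refl n t (x : grid n t) : grid_le x x.
Proof. by apply/gleP => i. Qed.

Lemma gle_trans n t (x y z : grid n t) : grid_le x y -> grid_le y z -> grid_le x z.
Proof. move=> /gleP H1 /gleP H2; apply/gleP => i; exact: leq_trans (H1 i) (H2 i). Qed.

Lemma gle_anti n t (x y : grid n t) : grid_le x y -> grid_le y x -> x = y.
Proof.
move=> /gleP H1 /gleP H2; apply/ffunP => i; apply/val_inj/anti_leq.
by rewrite H1 H2.
Qed.

Lemma glt_trans n t : transitive (@glt n t).
Proof.
move=> y x z /andP[l1 n1] /andP[l2 n2]; apply/andP; split; first exact: gle_trans l1 l2.
apply/eqP => exz; subst z; case/eqP: n1; exact: gle_anti.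
Qed.

Lemma rk_le n t (x y : grid n t) : grid_le x y -> rk x <= rk y.
Proof. move=> /gleP H; exact: leq_sum. Qed.

Lemma sum_lt (I : finType) (P : pred I) (a b : I -> nat) i0 :
  (forall i, P i -> a i <= b i) -> P i0 -> a i0 < b i0 ->
  \sum_(i | P i) a i < \sum_(i | P i) b i.
Proof.
move=> H Pi0 lt0; rewrite (bigD1 i0) //= [X in _ < X](bigD1 i0) //=.
apply: leq_trans (_ : b i0 + \sum_(i | P i && (i != i0)) a i <= _).
  by rewrite ltn_add2r.
rewrite leq_add2l; apply: leq_sum => i /andP[Pi _]; exact: H.
Qed.

Lemma neq_ex n t (x y : grid n t) : x != y -> exists i, x i != y i.
Proof.
move=> neq; case: (pickP (fun i => x i != y i)) => [i Hi|H]; first by exists i.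
case/eqP: neq; apply/ffunP => i; move: (H i) => /= /negbFE /eqP //.
Qed.

Lemma rk_lt n t (x y : grid n t) : grid_le x y -> x != y -> rk x < rk y.
Proof.
move=> le neq; have [i Hi] := neq_ex neq.
have /gleP H := le.
apply: (@sum_lt _ xpredT _ _ i) => //.
by rewrite ltn_neqAle Hi H.
Qed.

Lemma rk_eq n t (x y : grid n t) : grid_le x y -> rk x = rk y -> x = y.
Proof.
move=> le e; case: (eqVneq x y) => // neq.
have := rk_lt le neq; rewrite e; lia.
Qed.

Definition gbot n t : grid n t.+1 := [ffun _ => ord0].
Definition gtop n t : grid n t.+1 := [ffun _ => ord_max].

Lemma gbot_le n t (x : grid n t.+1) : grid_le (gbot n t) x.
Proof. by apply/gleP => i; rewrite ffunE. Qed.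

Lemma gtop_ge n t (x : grid n t.+1) : grid_le x (gtop n t).
Proof. by apply/gleP => i; rewrite ffunE -ltnS ltn_ord. Qed.

Lemma rk_bot n t : rk (gbot n t) = 0.
Proof. by rewrite /rk big1 // => i _; rewrite ffunE. Qed.

Lemma rk_top n t : rk (gtop n t) = n * t.
Proof.
rewrite /rk (eq_bigr (fun _ => t)) ?sum_nat_const ?card_ord // => i _.
by rewrite ffunE.
Qed.

Lemma rk_max n t (x : grid n t.+1) : rk x <= n * t.
Proof. rewrite -rk_top; exact/rk_le/gtop_ge. Qed.

Definition incr n t (x : grid n t.+1) (i : 'I_n) : grid n t.+1 :=
  [ffun j => if j == i then inord (x i).+1 else x j].

Lemma incr_at n t (x : grid n t.+1) i : x i < t -> (incr x i i : nat) = (x i).+1.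
Proof. by move=> lt; rewrite ffunE eqxx inordK. Qed.

Lemma incr_ne n t (x : grid n t.+1) i j : j != i -> incr x i j = x j.
Proof. by move=> ne; rewrite ffunE (negbTE ne). Qed.

Lemma rk_incr n t (x : grid n t.+1) i : x i < t -> rk (incr x i) = (rk x).+1.
Proof.
move=> lt; rewrite /rk (bigD1 i) //= [in RHS](bigD1 i) //= incr_at // addSn; congr _.+1.
congr (_ + _); apply: eq_bigr => j ne; by rewrite incr_ne.
Qed.

Lemma ichain n t (u v : grid n t.+1) : grid_le u v -> exists s : seq (grid n t.+1),
  [/\ sorted (@glt n t.+1) (u :: s), last u s = v, size s = rk v - rk u,
      (forall x, x \in u :: s -> grid_le u x && grid_le x v) &
      (forall i, i <= size s -> rk (nth u (u :: s) i) = rk u + i)].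
Proof.
move=> hle; move Hd: (rk v - rk u) => d.
elim: d u hle Hd => [|d IH] u hle hd.
  have e: u = v.
    apply: (rk_eq hle); have := rk_le hle; lia.
  subst v; exists [::]; split => //=.
  - by move=> x; rewrite inE => /eqP ->; rewrite gle_refl.
  - by move=> i; rewrite leqn0 => /eqP ->; rewrite addn0.
have neq: u != v by apply/eqP => e; subst v; rewrite subnn in hd.
have [i Hi] := neq_ex neq.
have /gleP H := hle.
have lti : u i < v i by rewrite ltn_neqAle Hi H.
have ltt : u i < t by apply: leq_trans lti _; rewrite -ltnS.
set u' := incr u i.
have hle' : grid_le u' v.
  apply/gleP => j; case: (eqVneq j i) => [->|ne]; first by rewrite incr_at.
  by rewrite incr_ne.
have lu : grid_le u u'.
  apply/gleP => j; case: (eqVneq j i) => [->|ne]; first by rewrite incr_at.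
  by rewrite incr_ne.
have ru : rk u' = (rk u).+1 by rewrite rk_incr.
have hd' : rk v - rk u' = d by rewrite ru; lia.
have [s [s1 s2 s3 s4 s5]] := IH u' hle' hd'.
exists (u' :: s); split => //=.
- apply/andP; split; last exact: s1.
  rewrite /glt lu /=; apply/eqP => e.
  by move: ru; rewrite -e; lia.
- by rewrite s3.
- move=> x; rewrite inE => /orP[/eqP ->|xs]; first by rewrite gle_refl hle.
  by have /andP[a b] := s4 x xs; rewrite b (gle_trans lu a).
- case=> [|j] hj /=; first by rewrite addn0.
  rewrite (set_nth_default u') //=.
  rewrite s5 ?ru ?addnS //.
Qed.

Lemma chain_copy n t (S : {set grid n t}) (s : seq (grid n t)) k x0 :
  sorted (@glt n t) s -> size s = k -> (forall x, x \in s -> x \in S) ->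
  induced_copy (chain_rel k) S (fun i : 'I_k => nth x0 s i).
Proof.
move=> so sz mem.
have H : forall i j : 'I_k, i < j -> glt (nth x0 s i) (nth x0 s j).
  move=> i j lt; apply: (sorted_ltn_nth (@glt_trans n t)) => //; by rewrite inE sz.
split; [|split].
- move=> i j e; apply/eqP; case: (ltngtP i j) => [lt|lt|/val_inj -> //].
  + by move: (H _ _ lt); rewrite /glt e eqxx andbF.
  + by move: (H _ _ lt); rewrite /glt e eqxx andbF.
- by move=> i; apply: mem; apply: mem_nth; rewrite sz.
- move=> i j; rewrite /chain_rel; case: (ltngtP i j) => [lt|lt|/val_inj ->].
  + by case/andP: (H _ _ lt).
  + case/andP: (H _ _ lt) => a b; apply/negbTE; apply: contra b => c.
    by apply/eqP; apply: gle_anti.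
  + by rewrite gle_refl.
Qed.

Lemma no_chain n t (S : {set grid n t}) k (rho : grid n t -> nat) M :
  (forall x y, x \in S -> y \in S -> glt x y -> rho x < rho y) ->
  (forall x, x \in S -> rho x <= M) -> M.+1 < k ->
  forall phi, ~ induced_copy (chain_rel k) S phi.
Proof.
move=> Hr HM Mk phi [inj [mem ord]].
have H : forall i (Hi : i < k), i <= rho (phi (Ordinal Hi)).
  elim=> [//|i IH] Hi.
  have Hi' : i < k by apply: ltnW.
  apply: leq_ltn_trans (IH Hi') _; apply: Hr; rewrite ?mem //.
  rewrite /glt ord /chain_rel /= leqnSn /=; apply/eqP => e.
  by have := inj _ _ e => /(congr1 val) /=; lia.
have Hk : k.-1 < k by rewrite prednK //; apply: leq_ltn_trans Mk.
have := H _ Hk; have := HM _ (mem (Ordinal Hk)); lia.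
Qed.

Lemma embeds_chain_bound n t k : embeds n t.+1 (chain_rel k) -> k <= (n * t).+1.
Proof.
case=> phi cp; rewrite leqNgt; apply/negP => lt.
apply: (@no_chain n t.+1 [set: grid n t.+1] k (@rk n t.+1) (n * t) _ _ lt phi cp).
- by move=> x y _ _ /andP[a b]; exact: rk_lt.
- by move=> x _; exact: rk_max.
Qed.

Definition antichainb (T : finType) (le : rel T) (B : {set T}) :=
  [forall x in B, forall y in B, (x != y) ==> ~~ le x y].

Lemma antichainP (T : finType) (le : rel T) (B : {set T}) :
  reflect (forall x y, x \in B -> y \in B -> x != y -> ~~ le x y) (antichainb le B).
Proof.
apply: (iffP forallP) => [H x y xB yB ne|H x].
  by move: (H x); rewrite xB /= => /forallP /(_ y); rewrite yB ne.
by apply/implyP => xB; apply/forallP => y; apply/implyP => yB; apply/implyP; apply: H.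
Qed.

Definition rnk (T : finType) (le : rel T) (x : T) := #|[set y | le y x]|.

Lemma rnk_lt (T : finType) (le : rel T) :
  reflexive le -> (forall x y, le x y -> le y x -> x = y) -> transitive le ->
  forall x y, le x y -> x != y -> rnk le x < rnk le y.
Proof.
move=> refl anti trans x y lxy ne; apply: proper_card; apply/properP; split.
  by apply/subsetP => z; rewrite !inE => lzx; apply: trans lxy.
exists y; rewrite !inE ?refl //; apply/negP => lyx; case/eqP: ne; exact: anti.
Qed.

Lemma dilworth (T : finType) (le : rel T) :
  reflexive le -> (forall x y, le x y -> le y x -> x = y) -> transitive le ->
  forall (A : {set T}) (w : nat),
  (forall B : {set T}, B \subset A -> antichainb le B -> #|B| <= w) ->
  exists c : T -> nat, (forall x, x \in A -> c x < w) /\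
    (forall x y, x \in A -> y \in A -> c x = c y -> le x y || le y x).
Proof.
move=> refl anti trans A.
move: {2}#|A|.+1 (ltnSn #|A|) => m; elim: m A => [//|m IH] A hA w hw.
have rlt := rnk_lt refl anti trans.
case: (set_0Vmem A) => [->|[a0 a0A]].
  by exists (fun _ => 0); split => x; rewrite inE.
case: (arg_maxnP (rnk le) a0A) => a aA amax.
have amaxl : forall z, z \in A -> le a z -> z = a.
  move=> z zA laz; apply/eqP; apply: contraT => ne.
  have ne' : a != z by rewrite eq_sym.
  have := rlt _ _ laz ne'; have := amax z zA; lia.
set A' := A :\ a.
have A'A : A' \subset A by apply: subsetDl.
have cA' : #|A'| < m.
  have : #|A'| < #|A| by apply: proper_card; apply/properP; split => //; exists a; rewrite ?inE ?eqxx.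
  lia.
have w0 : 0 < w.
  have := hw [set a]; rewrite cards1; apply.
    by rewrite sub1set.
  by apply/antichainP => x y; rewrite !inE => /eqP -> /eqP ->; rewrite eqxx.
case: (boolP [exists B : {set T}, [&& B \subset A', antichainb le B & #|B| == w]]) => [exB|noB].
  have [c' [c'lt c'ch]] := IH A' cA' w (fun B sB aB => hw B (subset_trans sB A'A) aB).
  have hit : forall B : {set T}, B \subset A' -> antichainb le B -> #|B| = w ->
      forall i, i < w -> exists2 z, z \in B & c' z = i.
    move=> B sB aB cB i iw.
    case: w w0 hw exB IH c'lt cB iw => [//|w'] _ _ _ _ c'lt cB iw.
    pose g := fun z => (inord (c' z) : 'I_w'.+1).
    have ginj : {in B &, injective g}.
      move=> x y xB yB e.
      have ex : c' x = c' y.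
        move: e => /(congr1 val); rewrite /g /= !inordK //; apply: c'lt;
          exact: (subsetP sB).
      apply/eqP; apply: contraT => ne.
      have := c'ch x y (subsetP sB _ xB) (subsetP sB _ yB) ex.
      move/antichainP: aB => aB.
      have ne' : y != x by rewrite eq_sym.
      by rewrite (negbTE (aB _ _ xB yB ne)) (negbTE (aB _ _ yB xB ne')).
    have : g @: B == [set: 'I_w'.+1].
      by rewrite eqEcard subsetT cardsT card_ord /= (card_in_imset ginj) cB.
    move/eqP => e.
    have : (inord i : 'I_w'.+1) \in g @: B by rewrite e inE.
    case/imsetP => z zB ez; exists z => //.
    have czw : c' z < w'.+1 by apply: c'lt; exact: (subsetP sB).
    by move: ez => /(congr1 val); rewrite /g /= !inordK.
  pose inS i z := [&& z \in A', c' z == i &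
      [exists B : {set T}, [&& B \subset A', antichainb le B, #|B| == w & z \in B]]].
  have exS : forall i : 'I_w, exists x, inS i x && [forall z, inS i z ==> (rnk le z <= rnk le x)].
    move=> i; case/existsP: exB => B0 /and3P[sB0 aB0 /eqP cB0].
    have [z0 z0B ez0] := hit B0 sB0 aB0 cB0 i (ltn_ord i).
    have Sz0 : inS i z0.
      rewrite /inS (subsetP sB0 _ z0B) ez0 eqxx /=; apply/existsP; exists B0.
      by rewrite sB0 aB0 cB0 eqxx z0B.
    case: (arg_maxnP (rnk le) Sz0) => x Sx xmax; exists x; rewrite Sx /=.
    by apply/forallP => z; apply/implyP; apply: xmax.
  have [x Hx] := fin_all_exists exS.
  have xS : forall i : 'I_w, inS i (x i) by move=> i; case/andP: (Hx i).
  have xmax : forall (i : 'I_w) z, inS i z -> rnk le z <= rnk le (x i).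
    by move=> i z Sz; case/andP: (Hx i) => _ /forallP /(_ z) /implyP; apply.
  have xA' : forall i : 'I_w, x i \in A' by move=> i; case/and3P: (xS i).
  have xc : forall i : 'I_w, c' (x i) = i by move=> i; case/and3P: (xS i) => _ /eqP.
  have below : forall (i : 'I_w) z, inS i z -> le z (x i).
    move=> i z Sz; have /and3P[zA' /eqP cz _] := Sz.
    have czx : c' z = c' (x i) by rewrite cz xc.
    case/orP: (c'ch z (x i) zA' (xA' i) czx) => // lxz.
    case: (eqVneq z (x i)) => [->|ne]; first exact: refl.
    have ne' : x i != z by rewrite eq_sym.
    have := rlt _ _ lxz ne'; have := xmax i z Sz; lia.
  have xinc : forall i j : 'I_w, i != j -> ~~ le (x i) (x j).
    move=> i j ne; apply/negP => lij.
    have /and3P[_ _ /existsP[Bj /and4P[sBj aBj /eqP cBj xjB]]] := xS j.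
    have [y yB cy] := hit Bj sBj aBj cBj i (ltn_ord i).
    have Sy : inS i y.
      rewrite /inS (subsetP sBj _ yB) cy eqxx /=; apply/existsP; exists Bj.
      by rewrite sBj aBj cBj eqxx yB.
    have lyj : le y (x j) by apply: trans (below i y Sy) lij.
    have ne' : y != x j.
      apply/eqP => e; move: cy; rewrite e xc => e'; case/eqP: ne; exact: val_inj.
    by move/antichainP: aBj => /(_ y (x j) yB xjB ne'); rewrite lyj.
  have xinj : injective x.
    move=> i j e; apply/eqP; apply: contraT => ne.
    by have := xinc i j ne; rewrite e refl.
  have [i0 Hi0] : exists i0, le (x i0) a.
    case: (pickP (fun i => le a (x i) || le (x i) a)) => [i /orP[lai|lia]|none].
    - have := amaxl _ (subsetP A'A _ (xA' i)) lai => e.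
      by move: (xA' i); rewrite e !inE eqxx.
    - by exists i.
    exfalso.
    pose X := a |: [set x i | i in 'I_w].
    have aX : a \notin [set x i | i in 'I_w].
      apply/imsetP => [[i _ e]]; by move: (xA' i); rewrite -e !inE eqxx.
    have := hw X.
    rewrite cardsU1 aX card_imset // card_ord.
    have -> : X \subset A.
      apply/subsetP => z; rewrite !inE => /orP[/eqP ->//|/imsetP[i _ ->]].
      exact: (subsetP A'A _ (xA' i)).
    have -> : antichainb le X.
      apply/antichainP => y z; rewrite !inE => /orP[/eqP ->|/imsetP[i _ ->]]
        /orP[/eqP ->|/imsetP[j _ ->]] ne.
      + by rewrite eqxx in ne.
      + by move: (none j) => /= /norP[].
      + by move: (none i) => /= /norP[].
      + apply: xinc; apply: contra ne => /eqP ->; exact: eqxx.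
    by move=> /(_ isT isT); lia.
  set K := a |: [set z in A' | (c' z == i0) && le z (x i0)].
  set A'' := A :\: K.
  have cA'' : #|A''| < m.
    have : #|A''| < #|A|.
      apply: proper_card; apply/properP; split; first exact: subsetDl.
      by exists a; rewrite // !inE eqxx.
    lia.
  have hw'' : forall B : {set T}, B \subset A'' -> antichainb le B -> #|B| <= w.-1.
    move=> B sB aB.
    have sBA' : B \subset A'.
      apply/subsetP => z /(subsetP sB); rewrite !inE => /andP[/norP[nza _] zA].
      by rewrite nza zA.
    have := hw B (subset_trans sBA' A'A) aB.
    rewrite leq_eqVlt => /orP[/eqP cB|]; last by lia.
    exfalso.
    have [z zB cz] := hit B sBA' aB cB i0 (ltn_ord i0).
    have Sz : inS i0 z.
      rewrite /inS (subsetP sBA' _ zB) cz eqxx /=; apply/existsP; exists B.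
      by rewrite sBA' aB cB eqxx zB.
    have lz := below i0 z Sz.
    move: (subsetP sB _ zB) (subsetP sBA' _ zB); rewrite !inE cz eqxx lz /=.
    by case/andP => /norP [_ H] _ H2; move: H; rewrite H2.
  have [c'' [c''lt c''ch]] := IH A'' cA'' w.-1 hw''.
  exists (fun z => if z \in K then w.-1 else c'' z); split.
    move=> z zA; case: ifP => zK; first lia.
    have : z \in A'' by rewrite in_setD zK zA.
    move/c''lt; lia.
  move=> y z yA zA.
  case: ifP => yK; case: ifP => zK.
  - move=> _.
    move: yK zK; rewrite !inE => /orP[/eqP->|/andP[yA' /andP[/eqP cy ly]]]
      /orP[/eqP->|/andP[zA' /andP[/eqP cz lz]]].
    + by rewrite refl.
    + by rewrite (trans _ _ _ lz Hi0) orbT.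
    + by rewrite (trans _ _ _ ly Hi0).
    + by apply: c'ch; rewrite ?in_setD1 ?yA' ?zA' ?cy ?cz.
  - move=> e; have : z \in A'' by rewrite in_setD zK zA.
    by move/c''lt; rewrite -e; lia.
  - move=> e; have : y \in A'' by rewrite in_setD yK yA.
    by move/c''lt; rewrite e; lia.
  - by apply: c''ch; rewrite in_setD ?yK ?zK ?yA ?zA.
have hw' : forall B : {set T}, B \subset A' -> antichainb le B -> #|B| <= w.-1.
  move=> B sB aB; have := hw B (subset_trans sB A'A) aB.
  rewrite leq_eqVlt => /orP[/eqP cB|]; last by lia.
  by move/existsPn: noB => /(_ B); rewrite sB aB cB eqxx.
have [c' [c'lt c'ch]] := IH A' cA' w.-1 hw'.
exists (fun z => if z == a then w.-1 else c' z); split.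
  move=> z zA; case: ifP => za; first lia.
  have : z \in A' by rewrite !inE za zA.
  by move/c'lt; lia.
move=> y z yA zA; case: ifP => ya; case: ifP => za.
- by rewrite (eqP ya) (eqP za) refl.
- move=> e; have : z \in A' by rewrite !inE za zA.
  by move/c'lt; rewrite -e; lia.
- move=> e; have : y \in A' by rewrite !inE ya yA.
  by move/c'lt; rewrite e; lia.
- by apply: c'ch; rewrite !inE ?ya ?za.
Qed.

Definition off (n j i : nat) : nat := if j <= i then i - j else i + n - j.
Definition prd (n j : nat) : nat := if j == 0 then n.-1 else j.-1.

Definition PP n T (j L : nat) : grid n T.+1 :=
  [ffun i : 'I_n => inord (minn T (L - off n j i * T))].

Lemma PPE n T j L (i : 'I_n) : (PP n T j L i : nat) = minn T (L - off n j i * T).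
Proof. by rewrite ffunE inordK // ltnS geq_minl. Qed.

Lemma PP_mono n T j L L' : L <= L' -> grid_le (PP n T j L) (PP n T j L').
Proof.
move=> le; apply/gleP => i; rewrite !PPE leq_min geq_minl /=.
apply: leq_trans (geq_minr _ _) _; lia.
Qed.

Lemma off_lt n j i : j < n -> i < n -> off n j i < n.
Proof. rewrite /off; case: ifP; lia. Qed.

Lemma PP0 n T j : PP n T j 0 = gbot n T.
Proof. by apply/ffunP => i; apply: val_inj; rewrite /= PPE ffunE /= sub0n minn0. Qed.

Lemma PPtop n T j : j < n -> PP n T j (n * T) = gtop n T.
Proof.
move=> jn; apply/ffunP => i; apply: val_inj; rewrite /= PPE ffunE /=.
have := off_lt jn (ltn_ord i) => h.
apply/minn_idPl.
have : (off n j i).+1 * T <= n * T by apply: leq_mul.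
rewrite mulSn; lia.
Qed.

Lemma lexsum n T L : L <= n * T -> \sum_(o < n) minn T (L - o * T) = L.
Proof.
elim: n L => [|n IH] L hL; first by rewrite big_ord0; lia.
rewrite big_ord_recl /= mul0n subn0.
case: (leqP T L) => hTL.
  have e : \sum_(i < n) minn T (L - bump 0 i * T) = \sum_(i < n) minn T ((L - T) - i * T).
    by apply: eq_bigr => i _; rewrite /bump leq0n add1n mulSn subnDA.
  rewrite e IH; first lia.
  move: hL; rewrite mulSn; lia.
rewrite big1 ?addn0 // => i _.
have -> : L - bump 0 i * T = 0 by rewrite /bump leq0n add1n mulSn; lia.
by rewrite minn0.
Qed.

Lemma off_inj n j i i' : j < n -> i < n -> i' < n -> off n j i = off n j i' -> i = i'.
Proof. rewrite /off; case: ifP; case: ifP; lia. Qed.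

Lemma rk_PP n T j L : j < n -> L <= n * T -> rk (PP n T j L) = L.
Proof.
move=> jn hL.
have hinj : injective (fun i : 'I_n => Ordinal (off_lt jn (ltn_ord i))).
  move=> i i' /(congr1 val) /= e; apply/val_inj; exact: off_inj jn (ltn_ord i) (ltn_ord i') e.
rewrite /rk (eq_bigr (fun i : 'I_n => minn T (L - (Ordinal (off_lt jn (ltn_ord i)) : nat) * T))); last first.
  by move=> i _; rewrite PPE.
rewrite -(reindex_inj (P := xpredT) (F := fun o : 'I_n => minn T (L - o * T)) hinj).
exact: lexsum.
Qed.

Lemma PP_distinct n T j l L : j < n -> l < n -> j != l -> 0 < L -> L < n * T ->
  PP n T j L != PP n T l L.
Proof.
move=> jn ln jl L0 Ln; apply/eqP => e.
have pn : prd n j < n by rewrite /prd; case: ifP; lia.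
have a : (PP n T j L (Ordinal jn) : nat) = PP n T l L (Ordinal jn) by rewrite e.
have b : (PP n T j L (Ordinal pn) : nat) = PP n T l L (Ordinal pn) by rewrite e.
move: a b; rewrite !PPE /= => a.
have Tpos : 0 < T by case: (posnP T) Ln => // ->; rewrite muln0.
have offjj : off n j j = 0 by rewrite /off leqnn subnn.
have offjp : off n j (prd n j) = n.-1 by rewrite /off /prd; case: ifP; case: ifP; lia.
have offlp : (off n l (prd n j)).+1 = off n l j by rewrite /off /prd; case: ifP; case: ifP; case: ifP; lia.
rewrite offjj offjp mul0n subn0 in a *.
move=> c.
have h1 : off n l j * T < L.
  have : 0 < minn T L by rewrite leq_min Tpos L0.
  rewrite a => h; apply: contraLR h; rewrite -!leqNgt => h.
  by rewrite (_ : L - _ = 0) ?minn0 //; lia.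
have h2 : minn T (L - off n l (prd n j) * T) = T.
  apply/minn_idPl; rewrite -offlp mulSn in h1; lia.
have h3 : minn T (L - n.-1 * T) < T.
  have : n.-1.+1 * T = n * T by rewrite prednK //; lia.
  rewrite mulSn => hh.
  rewrite gtn_min; apply/orP; right; lia.
by move: h3; rewrite c h2 ltnn.
Qed.

Lemma PP_incomp n T j l L : j < n -> l < n -> j != l -> 0 < L -> L < n * T ->
  grid_le (PP n T j L) (PP n T l L) = false.
Proof.
move=> jn ln jl L0 Ln; apply/negbTE/negP => le.
have := PP_distinct (T:=T) jn ln jl L0 Ln; rewrite (rk_eq le) ?eqxx //.
by rewrite !rk_PP //; apply: ltnW.
Qed.

Definition FA n T w : {set grid n T.+1} :=
  [set x | [exists p : 'I_w * 'I_(n * T).+1, x == PP n T p.1 p.2]].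

Lemma FA_mem n T w (j L : nat) : j < w -> L <= n * T -> PP n T j L \in FA n T w.
Proof.
move=> jw Ln; rewrite inE; apply/existsP.
by exists (Ordinal jw, Ordinal (Ln : L < (n * T).+1)).
Qed.

Lemma FA_free n T w : w <= n -> induced_free (antichain_rel w.+1) (FA n T w).
Proof.
move=> wn phi [inj [mem ord]].
have ex : forall i, exists p : 'I_w * 'I_(n * T).+1, phi i = PP n T p.1 p.2.
  by move=> i; move: (mem i); rewrite inE => /existsP [p /eqP e]; exists p.
have [pf Hpf] := fin_all_exists ex.
case: (pickP (fun q : 'I_w.+1 * 'I_w.+1 => (q.1 != q.2) && ((pf q.1).1 == (pf q.2).1)))
  => [[i i'] /andP[/= ne /eqP ej] | none].
  have H1 := ord i i'; have H2 := ord i' i.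
  rewrite /antichain_rel (negbTE ne) in H1.
  rewrite /antichain_rel eq_sym (negbTE ne) in H2.
  rewrite !Hpf ej in H1 H2.
  case: (leqP (pf i).2 (pf i').2) => h.
    by rewrite PP_mono in H1.
  by rewrite PP_mono ?(ltnW h) in H2.
have : injective (fun i => (pf i).1).
  move=> a b e; apply/eqP; move: (none (a, b)); rewrite /= e eqxx andbT.
  by move/negbFE.
by move/leq_card; rewrite !card_ord ltnn.
Qed.

Lemma FA_card n T w : #|FA n T w| <= w * (n * T).+1.
Proof.
have sub : FA n T w \subset [set PP n T (p.1 : 'I_w) (p.2 : 'I_(n * T).+1) | p in [set: 'I_w * 'I_(n * T).+1]].
  apply/subsetP => x; rewrite inE => /existsP [p /eqP ->].
  by apply/imsetP; exists p.
apply: leq_trans (subset_leq_card sub) _.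
apply: leq_trans (leq_imset_card _ _) _.
by rewrite cardsT card_prod !card_ord.
Qed.

Lemma FA_sat n T w : 0 < w -> w <= n -> forall f, f \notin FA n T w ->
  exists phi, induced_copy (antichain_rel w.+1) (f |: FA n T w) phi.
Proof.
move=> w0 wn f fF.
have n0 : 0 < n by apply: leq_trans wn.
have j0n : 0 < n := n0.
have botF : gbot n T \in FA n T w by rewrite -(PP0 n T 0); apply: FA_mem.
have topF : gtop n T \in FA n T w by rewrite -(@PPtop n T 0) //; apply: FA_mem.
have fbot : f != gbot n T by apply: contraNneq fF => ->.
have ftop : f != gtop n T by apply: contraNneq fF => ->.
have exlo : forall j : 'I_w, exists L, ~~ grid_le (PP n T j L) f.
  move=> j; exists (n * T); rewrite PPtop; last by apply: leq_trans (ltn_ord j) wn.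
  apply: contra ftop => le; apply/eqP; apply: gle_anti => //; exact: gtop_ge.
have exhi : forall j : 'I_w, exists L, grid_le f (PP n T j L).
  move=> j; exists (n * T); rewrite PPtop; last by apply: leq_trans (ltn_ord j) wn.
  exact: gtop_ge.
pose lo j := ex_minn (exlo j).
pose hi j := ex_minn (exhi j).
have loP : forall j : 'I_w, ~~ grid_le (PP n T j (lo j)) f /\
    (forall L, ~~ grid_le (PP n T j L) f -> lo j <= L).
  by move=> j; rewrite /lo; case: ex_minnP => m h1 h2; split.
have hiP : forall j : 'I_w, grid_le f (PP n T j (hi j)) /\
    (forall L, grid_le f (PP n T j L) -> hi j <= L).
  by move=> j; rewrite /hi; case: ex_minnP => m h1 h2; split.
have jn : forall j : 'I_w, j < n by move=> j; apply: leq_trans (ltn_ord j) wn.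
have hiN : forall j : 'I_w, hi j <= n * T.
  move=> j; apply: (proj2 (hiP j)); rewrite PPtop //; exact: gtop_ge.
pose L := \max_(j < w) lo j.
have [j0 eL] : {j0 : 'I_w | L = lo j0} by apply: eq_bigmax; rewrite card_ord.
have claim : forall l, L < hi l.
  move=> l; rewrite ltnNge; apply/negP => hle.
  move: (hiP l) => [h1 h2].
  case hh: (hi l) => [|h].
    move: h1; rewrite hh PP0 => le.
    by case/eqP: fbot; apply: gle_anti => //; exact: gbot_le.
  have le0 : grid_le (PP n T j0 h) f.
    case/orP: (orbN (grid_le (PP n T j0 h) f)) => // nle.
    have := (proj2 (loP j0)) _ nle; rewrite -eL; lia.
  have hN : h.+1 <= n * T by rewrite -hh.
  have r1 := rk_le le0; rewrite rk_PP // in r1; last by lia.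
  have r2 := rk_le h1; rewrite hh rk_PP // in r2.
  case: (eqVneq (rk f) h) => er.
    have e : PP n T j0 h = f by apply: rk_eq le0 _; rewrite er rk_PP //; lia.
    by move: fF; rewrite -e FA_mem //; lia.
  have e : f = PP n T l h.+1 by rewrite -hh; apply: rk_eq h1 _; rewrite hh rk_PP //; lia.
  by move: fF; rewrite e FA_mem.
have Lpos : 0 < L.
  rewrite eL lt0n; apply/eqP => e; move: (proj1 (loP j0)); rewrite e PP0.
  by rewrite gbot_le.
have LN : L < n * T by apply: leq_trans (claim j0) (hiN j0).
have nle1 : forall j : 'I_w, ~~ grid_le (PP n T j L) f.
  move=> j; apply/negP => le.
  have : grid_le (PP n T j (lo j)) f.
    by apply: gle_trans le; apply: PP_mono; apply: leq_bigmax.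
  by move: (proj1 (loP j)) => /negP.
have nle2 : forall j : 'I_w, ~~ grid_le f (PP n T j L).
  move=> j; apply/negP => le; have := (proj2 (hiP j)) _ le; have := claim j; lia.
pose phi := fun i : 'I_w.+1 => if i == ord_max then f else PP n T i L.
have iw : forall i : 'I_w.+1, i != ord_max -> i < w.
  move=> i ne; have := ltn_ord i; move: ne; rewrite -val_eqE /= => ne; lia.
have ord : forall i i', grid_le (phi i) (phi i') = antichain_rel w.+1 i i'.
  move=> i i'; rewrite /phi /antichain_rel.
  case: (eqVneq i ord_max) => [ei|ne]; case: (eqVneq i' ord_max) => [ei'|ne'].
  - by rewrite gle_refl ei ei' eqxx.
  - rewrite ei eq_sym (negbTE ne'); apply/negbTE; exact: (nle2 (Ordinal (iw _ ne'))).
  - rewrite ei' (negbTE ne); apply/negbTE; exact: (nle1 (Ordinal (iw _ ne))).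
  - case: (eqVneq i i') => [->|nii]; first by rewrite gle_refl.
    apply: PP_incomp => //; try lia.
    + by apply: leq_trans (iw _ ne) wn.
    + by apply: leq_trans (iw _ ne') wn.
exists phi; split; [|split].
- move=> i i' e; apply/eqP; rewrite -[_ == _]/(antichain_rel _ i i') -ord e gle_refl //.
- move=> i; rewrite /phi; case: (eqVneq i ord_max) => [_|ne]; first by rewrite setU11.
  rewrite setU1r // FA_mem //; [exact: iw| lia].
- exact: ord.
Qed.

Lemma hit_all (T : finType) (B : {set T}) (c : T -> nat) w :
  (forall x, x \in B -> c x < w) -> {in B &, injective c} -> #|B| = w ->
  forall i, i < w -> exists2 z, z \in B & c z = i.
Proof.
move=> clt cinj cB i iw.
case: w clt cB iw => [//|w'] clt cB iw.
pose g := fun z => (inord (c z) : 'I_w'.+1).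
have ginj : {in B &, injective g}.
  move=> x y xB yB e; apply: cinj => //.
  by move: e => /(congr1 val); rewrite /g /= !inordK //; apply: clt.
have : g @: B == [set: 'I_w'.+1].
  by rewrite eqEcard subsetT cardsT card_ord /= (card_in_imset ginj) cB.
move/eqP => e.
have : (inord i : 'I_w'.+1) \in g @: B by rewrite e inE.
case/imsetP => z zB ez; exists z => //.
have czw : c z < w'.+1 by apply: clt.
by move: ez => /(congr1 val); rewrite /g /= !inordK.
Qed.

Lemma sat_lower n T k (F : {set grid n T.+1}) : 1 < k ->
  induced_saturated (antichain_rel k) F -> (n * T).+1 <= #|F|.
Proof.
move=> k1 [free sat].
have refl : reflexive (@grid_le n T.+1) by move=> x; exact: gle_refl.
have anti : forall x y : grid n T.+1, grid_le x y -> grid_le y x -> x = y by move=> x y; exact: gle_anti.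
have trans : transitive (@grid_le n T.+1) by move=> y x z; exact: gle_trans.
have width : forall B : {set grid n T.+1}, B \subset F -> antichainb (@grid_le n T.+1) B -> #|B| <= k.-1.
  move=> B sB /antichainP aB; rewrite leqNgt; apply/negP => big.
  have kB : k <= #|B| by lia.
  pose phi := fun i : 'I_k => nth (gbot n T) (enum B) i.
  have hi : forall i : 'I_k, i < size (enum B) by move=> i; rewrite -cardE; apply: leq_trans kB.
  have phiB : forall i, phi i \in B by move=> i; rewrite -mem_enum; apply: mem_nth.
  have phinj : injective phi.
    move=> i j e; apply/val_inj; apply/eqP; rewrite -(nth_uniq (gbot n T) (hi i) (hi j) (enum_uniq _)).
    by apply/eqP.
  apply: (free phi); split => //; split; first by move=> i; apply: (subsetP sB).
  move=> i j; rewrite /antichain_rel; case: (eqVneq i j) => [->|ne]; first exact: gle_refl.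
  apply/negbTE; apply: aB => //; apply: contra ne => /eqP e; apply/eqP; exact: phinj.
have [c [clt cch]] := dilworth refl anti trans width.
have claim : forall f, f \notin F -> exists g, [/\ g \in F, c g = 0, ~~ grid_le f g & ~~ grid_le g f].
  move=> f fF; have [phi [inj [mem ord]]] := sat f fF.
  have [i0 e0] : exists i0, phi i0 = f.
    case: (pickP (fun i => phi i == f)) => [i /eqP e|none]; first by exists i.
    exfalso; apply: (free phi); split => //; split => // i.
    by move: (mem i); rewrite in_setU1 none.
  have inF : forall i, i != i0 -> phi i \in F.
    move=> i ne; move: (mem i); rewrite in_setU1 -e0 => /orP[/eqP e|//].
    by case/eqP: ne; apply: inj.
  pose B := [set~ i0].
  have cB : #|B| = k.-1 by rewrite cardsC1 card_ord.
  have cltB : forall i, i \in B -> c (phi i) < k.-1 by move=> i; rewrite /B !inE => ni; apply: clt; apply: inF.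
  have cinj : {in B &, injective (fun i => c (phi i))}.
    move=> i j; rewrite /B !inE => ni nj e.
    have := cch _ _ (inF _ ni) (inF _ nj) e.
    rewrite !ord /antichain_rel; case: (eqVneq i j) => //.
  have k0 : 0 < k.-1 by lia.
  have [i iB ci] := hit_all cltB cinj cB k0.
  have ni : i != i0 by move: iB; rewrite /B !inE.
  exists (phi i); split => //; first exact: inF.
  - by rewrite -e0 ord /antichain_rel eq_sym (negbTE ni).
  - by rewrite -e0 ord /antichain_rel (negbTE ni).
set C := [set g in F | c g == 0].
have Cch : forall g h, g \in C -> h \in C -> grid_le g h || grid_le h g.
  move=> g h; rewrite /C !inE => /andP[gF /eqP cg] /andP[hF /eqP ch].
  by apply: cch => //; rewrite cg ch.
have level : forall l, l <= n * T -> exists2 x, x \in F & rk x = l.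
  move=> l hl.
  set Ls := [set g in C | rk g <= l].
  set Us := [set g in C | l < rk g].
  have [u [ru Lu uU]] : exists u, [/\ rk u <= l, forall g, g \in Ls -> grid_le g u &
      forall g, g \in Us -> grid_le u g].
    case: (set_0Vmem Ls) => [L0|[g0 g0L]].
      exists (gbot n T); split; first by rewrite rk_bot.
      - by move=> g; rewrite L0 !inE.
      - by move=> g _; exact: gbot_le.
    case: (arg_maxnP (@rk n T.+1) g0L) => u uL umax.
    have uL' : u \in Ls by [].
    move: (uL'); rewrite /Ls /Us in_set => /andP[uC rul].
    exists u; split => //.
    - move=> g gL; move: (gL); rewrite /Ls /Us in_set => /andP[gC _].
      case/orP: (Cch _ _ gC uC) => // lug.
      case: (eqVneq u g) => [->|ne]; first exact: gle_refl.
      have := rk_lt lug ne; have := umax g gL; lia.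
    - move=> g; rewrite /Ls /Us in_set => /andP[gC lg].
      case/orP: (Cch _ _ uC gC) => // lgu.
      have := rk_le lgu; lia.
  have [v [rv Uv uv]] : exists v, [/\ l <= rk v, forall g, g \in Us -> grid_le v g &
      grid_le u v].
    case: (set_0Vmem Us) => [U0|[g0 g0U]].
      exists (gtop n T); split; first by rewrite rk_top.
      - by move=> g; rewrite U0 !inE.
      - exact: gtop_ge.
    case: (arg_minnP (@rk n T.+1) g0U) => v vU vmin.
    have vU' : v \in Us by [].
    move: (vU'); rewrite /Ls /Us in_set => /andP[vC rvl].
    exists v; split; first lia.
    - move=> g gU; move: (gU); rewrite /Ls /Us in_set => /andP[gC _].
      case/orP: (Cch _ _ gC vC) => // lgv.
      case: (eqVneq g v) => [->|ne]; first exact: gle_refl.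
      have := rk_lt lgv ne; have := vmin g gU; lia.
    - exact: uU.
  have [s [s1 s2 s3 s4 s5]] := ichain uv.
  pose x := nth u (u :: s) (l - rk u).
  have rx : rk x = l by rewrite /x s5 ?s3; lia.
  have xin : x \in u :: s by apply: mem_nth => /=; rewrite s3; lia.
  have /andP[ux xv] := s4 x xin.
  exists x => //.
  apply/negPn/negP => xF.
  have [g [gF cg n1 n2]] := claim x xF.
  have gC : g \in C by rewrite /Ls /Us in_set gF cg eqxx.
  case: (leqP (rk g) l) => hg.
    have : grid_le g x by apply: gle_trans (Lu g _) ux; rewrite /Ls /Us in_set gC hg.
    by rewrite (negbTE n2).
  have : grid_le x g by apply: gle_trans xv (Uv g _); rewrite /Ls /Us in_set gC hg.
  by rewrite (negbTE n1).
have ex : forall l : 'I_(n * T).+1, exists x, (x \in F) && (rk x == l).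
  by move=> l; have [x xF rx] := level l (ltn_ord l); exists x; rewrite xF rx eqxx.
have [xf Hxf] := fin_all_exists ex.
have xinj : injective xf.
  move=> i j e; apply/val_inj; move: (Hxf i) (Hxf j) => /andP[_ /eqP ei] /andP[_ /eqP ej].
  by rewrite /= -ei -ej e.
have sub : [set xf i | i in 'I_(n * T).+1] \subset F.
  by apply/subsetP => x /imsetP [i _ ->]; case/andP: (Hxf i).
have := subset_leq_card sub; rewrite card_imset // card_ord //.
Qed.

Definition lowP n T q r (x : grid n T.+1) : bool :=
  [forall i : 'I_n, ((q < i) ==> ((x i : nat) == 0)) && ((val i == q) ==> (x i <= r))].
Definition upP n T q r (x : grid n T.+1) : bool :=
  [forall i : 'I_n, ((q < i) ==> ((x i : nat) == T)) &&
     ((val i == q) ==> ((x i < r) || ((x i : nat) == T)))].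
Definition FC n T q r : {set grid n T.+1} := [set x | lowP q r x || upP q r x].

Definition Sq n t q (x : grid n t) : nat := \sum_(i : 'I_n | i < q) (x i : nat).
Definition Rq n t q (x : grid n t) : nat := \sum_(i : 'I_n | q < i) (x i : nat).

Lemma card_lt n q : q <= n -> #|[pred i : 'I_n | i < q]| = q.
Proof.
move=> qn.
have e : [pred i : 'I_n | i < q] =i [set widen_ord qn j | j in 'I_q].
  move=> i; rewrite inE; apply/idP/imsetP => [iq | [j _ ->]].
    by exists (Ordinal iq) => //; apply: val_inj.
  by rewrite /= ltn_ord.
rewrite (eq_card e) card_imset ?card_ord //.
by move=> a b /(congr1 val) /= eab; apply: val_inj.
Qed.

Lemma Sq_top n T q : q <= n -> Sq q (gtop n T) = q * T.
Proof.
move=> qn; rewrite /Sq (eq_bigr (fun _ => T)); last by move=> i _; rewrite ffunE.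
by rewrite sum_nat_const card_lt.
Qed.

Lemma Sq_le n t q (x y : grid n t) : grid_le x y -> Sq q x <= Sq q y.
Proof. by move=> /gleP H; apply: leq_sum => i _. Qed.

Lemma rk_split n t q (x : grid n t) (qn : q < n) :
  rk x = Sq q x + x (Ordinal qn) + Rq q x.
Proof.
rewrite /rk (bigID (fun i : 'I_n => i < q)) /= -addnA; congr (_ + _).
rewrite (bigD1 (Ordinal qn)) /=; last by rewrite ltnn.
congr (_ + _); apply: eq_bigl => i; rewrite -val_eqE /=.
by case: (ltngtP i q).
Qed.

Lemma expn_mono a b e : a <= b -> a ^ e <= b ^ e.
Proof. by move=> ab; elim: e => // e IH; rewrite !expnS leq_mul. Qed.

Lemma FC_card n T q r (qn : q < n) (rT : r < T) :
  #|FC n T q r| <= 2 * ((T.+1) ^ q * r.+1).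
Proof.
pose s := Ordinal qn.
pose low := [set x : grid n T.+1 | lowP q r x].
pose up := [set x : grid n T.+1 | upP q r x].
have e : FC n T q r = low :|: up by apply/setP => x; rewrite !inE.
pose rs : grid n T.+1 -> {ffun 'I_q -> 'I_T.+1} := fun x => [ffun j : 'I_q => x (widen_ord (ltnW qn) j)].
have rsE : forall x y : grid n T.+1, rs x = rs y -> forall i : 'I_n, i < q -> x i = y i.
  move=> x y exy i iq.
  have : rs x (Ordinal iq) = rs y (Ordinal iq) by rewrite exy.
  by rewrite /rs !ffunE; congr (x _ = y _); apply: val_inj.
pose fl := fun x : grid n T.+1 => (rs x, (inord (x s) : 'I_r.+1)).
pose fu := fun x : grid n T.+1 =>
  (rs x, (inord (if (x s : nat) == T then r else x s) : 'I_r.+1)).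
have cl : #|low| <= (T.+1) ^ q * r.+1.
  rewrite -(@card_in_imset _ _ fl); last first.
    move=> x y; rewrite !inE => /forallP hx /forallP hy [] e1 e2.
    apply/ffunP => i; case: (ltngtP i q) => iq.
    - exact: rsE e1 i iq.
    - apply: val_inj; move: (hx i) (hy i); rewrite iq /= => /andP[/eqP -> _] /andP[/eqP -> _] //.
    - have is' : i = s by apply: val_inj.
      subst i; move: (hx s) (hy s); rewrite eqxx /= ltnn /= => hxs hys.
      apply: val_inj; move: e2 => /(congr1 val); rewrite /= !inordK //.
  have := max_card [set fl x | x in low]; rewrite card_prod card_ffun !card_ord //.
have cu : #|up| <= (T.+1) ^ q * r.+1.
  rewrite -(@card_in_imset _ _ fu); last first.
    move=> x y; rewrite !inE => /forallP hx /forallP hy [] e1 e2.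
    apply/ffunP => i; case: (ltngtP i q) => iq.
    - exact: rsE e1 i iq.
    - apply: val_inj; move: (hx i) (hy i); rewrite iq /= => /andP[/eqP -> _] /andP[/eqP -> _] //.
    - have is' : i = s by apply: val_inj.
      subst i; move: (hx s) (hy s); rewrite eqxx /= ltnn /= => hxs hys.
      move: e2 => /(congr1 val) /=.
      case: (eqVneq (x s : nat) T) hxs => ex hxs; case: (eqVneq (y s : nat) T) hys => ey hys;
        rewrite /= ?inordK //; try lia; move=> h; apply: ord_inj; rewrite ?ex ?ey; lia.
  have := max_card [set fu x | x in up]; rewrite card_prod card_ffun !card_ord //.
rewrite e; apply: leq_trans (leq_card_setU _ _) _; rewrite mul2n -addnn; exact: leq_add.
Qed.

Lemma FC_card_bound n T q r (qn : q < n) (rT : r < T) :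
  #|FC n T q r| <= 2 ^ (q * T + r + 1).
Proof.
apply: leq_trans (FC_card qn rT) _.
have h1 : (T.+1) ^ q <= 2 ^ (q * T).
  rewrite mulnC expnM; apply: expn_mono; exact: ltn_expl.
have h2 : r.+1 <= 2 ^ r by exact: ltn_expl.
rewrite addn1 expnS expnD leq_mul2l /=; exact: leq_mul.
Qed.

Definition vs n T q (qn : q < n) (x : grid n T.+1) : nat := x (Ordinal qn).

Definition rhoC n T q r (qn : q < n) (x : grid n T.+1) : nat :=
  Sq q x + (if lowP q r x then vs qn x
            else if vs qn x == T then r.+1 else (vs qn x).+1).

Lemma lowP_R n T q r (x : grid n T.+1) : lowP q r x -> Rq q x = 0.
Proof.
move/forallP => h; rewrite /Rq big1 // => i qi.
by move: (h i); rewrite qi /= => /andP[/eqP -> _].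
Qed.

Lemma lowP_s n T q r (qn : q < n) (x : grid n T.+1) : lowP q r x -> vs qn x <= r.
Proof. by move/forallP => /(_ (Ordinal qn)) /andP[_]; rewrite eqxx. Qed.

Lemma upP_s n T q r (qn : q < n) (x : grid n T.+1) : upP q r x ->
  (vs qn x < r) || (vs qn x == T).
Proof. by move/forallP => /(_ (Ordinal qn)) /andP[_]; rewrite eqxx. Qed.

Lemma FC_free n T q r (qn : q < n) (rT : r < T) :
  induced_free (chain_rel (q * T + r + 3)) (FC n T q r).
Proof.
move=> phi; apply: (@no_chain n T.+1 (FC n T q r) _ (rhoC r qn) (q * T + r + 1)); last by lia.
- move=> x y; rewrite !inE => hx hy /andP[lxy nxy].
  have /gleP lxy' := lxy.
  have Sle := Sq_le q lxy.
  have xsy : vs qn x <= vs qn y := lxy' _.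
  rewrite /rhoC.
  case: (boolP (lowP q r x)) => lx; case: (boolP (lowP q r y)) => ly /=.
  + have := rk_lt lxy nxy; rewrite (rk_split x qn) (rk_split y qn) (lowP_R lx) (lowP_R ly).
    by rewrite !addn0.
  + have uy : upP q r y by move: hy; rewrite (negbTE ly).
    have xr := lowP_s qn lx.
    have ys := upP_s qn uy.
    case: (eqVneq (vs qn y) T) => yT /=; first lia.
    rewrite /= in ys; lia.
  + exfalso; move/negP: lx; apply; apply/forallP => i.
    move/forallP: ly => /(_ i) /andP[h1 h2]; apply/andP; split.
    * apply/implyP => qi; move: h1; rewrite qi /= => /eqP e.
      by move: (lxy' i); rewrite e leqn0.
    * apply/implyP => iq; move: h2; rewrite iq /= => h2.
      exact: leq_trans (lxy' i) h2.
  + have ux : upP q r x by move: hx; rewrite (negbTE lx).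
    have uy : upP q r y by move: hy; rewrite (negbTE ly).
    have xs' := upP_s qn ux.
    have ys' := upP_s qn uy.
    case: (ltngtP (vs qn x) (vs qn y)) => hs.
    * case: (eqVneq (vs qn y) T) => yT; case: (eqVneq (vs qn x) T) => xT;
        rewrite /= in xs' ys' *; lia.
    * lia.
    * have [i Hi] := neq_ex nxy.
      have iq : i < q.
        case: (ltngtP i q) => // iq.
          move: (forallP ux i) (forallP uy i); rewrite iq /= => /andP[/eqP a _] /andP[/eqP b _].
          by move: Hi; rewrite -val_eqE /= a b eqxx.
        have is' : i = Ordinal qn by apply: val_inj.
        subst i; case/eqP: Hi; apply: ord_inj; exact: hs.
      have : Sq q x < Sq q y.
        have hlt : (x i : nat) < y i by rewrite ltn_neqAle Hi lxy'.
        exact: (@sum_lt _ (fun i : 'I_n => i < q) (fun i => x i : nat) (fun i => y i : nat) i (fun j _ => lxy' j) iq hlt).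
      rewrite hs; lia.
- move=> x; rewrite inE => hx; rewrite /rhoC.
  have : Sq q x <= q * T by rewrite -(Sq_top T (ltnW qn)); apply: Sq_le; exact: gtop_ge.
  case: ifP => lx.
    have := lowP_s qn lx; lia.
  have ux : upP q r x by move: hx; rewrite lx.
  have xs' := upP_s qn ux.
  case: (eqVneq (vs qn x) T) => xT /=; first lia.
  rewrite /= in xs'; lia.
Qed.

Definition mk3 n T q (f : grid n T.+1) (b c : 'I_T.+1) : grid n T.+1 :=
  [ffun i : 'I_n => if i < q then f i else if val i == q then b else c].

Lemma mk3_lt n T q f b c (i : 'I_n) : i < q -> @mk3 n T q f b c i = f i.
Proof. by move=> iq; rewrite ffunE iq. Qed.
Lemma mk3_s n T q (qn : q < n) f b c : @mk3 n T q f b c (Ordinal qn) = b.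
Proof. by rewrite ffunE /= ltnn eqxx. Qed.
Lemma mk3_gt n T q f b c (i : 'I_n) : q < i -> @mk3 n T q f b c i = c.
Proof. move=> qi; rewrite ffunE; case: ltngtP qi => //. Qed.

Lemma Sq_mk3 n T q f b c : Sq q (@mk3 n T q f b c) = Sq q f.
Proof. by apply: eq_bigr => i iq; rewrite mk3_lt. Qed.
Lemma Rq_mk3 n T q f b c : Rq q (@mk3 n T q f b c) = \sum_(i : 'I_n | q < i) (c : nat).
Proof. by apply: eq_bigr => i iq; rewrite mk3_gt. Qed.

Lemma rk_mk3 n T q (qn : q < n) f b c :
  rk (@mk3 n T q f b c) = Sq q f + b + \sum_(i : 'I_n | q < i) (c : nat).
Proof. by rewrite (rk_split _ qn) Sq_mk3 Rq_mk3 mk3_s. Qed.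

Lemma mk3_le n T q (f f' : grid n T.+1) (b c b' c' : 'I_T.+1) : (forall i : 'I_n, i < q -> f i <= f' i) ->
  b <= b' -> c <= c' -> grid_le (@mk3 n T q f b c) (@mk3 n T q f' b' c').
Proof.
move=> hf hb hc; apply/gleP => i; rewrite !ffunE.
case: ifP => iq; first exact: hf.
by case: ifP.
Qed.

Lemma lowP_down n T q r (x y : grid n T.+1) : grid_le x y -> lowP q r y -> lowP q r x.
Proof.
move=> /gleP le /forallP ly; apply/forallP => i; move: (ly i) => /andP[h1 h2].
apply/andP; split; apply/implyP => h.
- by move: h1; rewrite h /= => /eqP e; move: (le i); rewrite e leqn0.
- by move: h2; rewrite h /=; apply: leq_trans.
Qed.

Lemma upP_intro n T q r (qn : q < n) (x : grid n T.+1) :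
  (forall i : 'I_n, q < i -> T <= x i) -> (vs qn x < r) || (vs qn x == T) -> upP q r x.
Proof.
move=> h hs; apply/forallP => i; apply/andP; split; apply/implyP => hi.
- have := h i hi; have := ltn_ord (x i); rewrite ltnS => a b.
  by apply/eqP; apply: anti_leq; rewrite a b.
- have e : i = Ordinal qn by apply: val_inj; exact/eqP.
  by rewrite e.
Qed.

Lemma FC_sat n T q r (qn : q < n) (rT : r < T) : forall f, f \notin FC n T q r ->
  exists phi, induced_copy (chain_rel (q * T + r + 3)) (f |: FC n T q r) phi.
Proof.
move=> f fF.
pose s := Ordinal qn.
set v := vs qn f.
have vT : v <= T by rewrite /v /vs -ltnS ltn_ord.
pose RT := \sum_(i : 'I_n | q < i) T.
pose g := mk3 q f (inord (minn v r)) ord0.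
pose h1 := mk3 q f (f s) ord_max.
pose h2 := mk3 q f (inord r.-1) ord_max.
pose h3 := mk3 q f ord_max ord_max.
have vg : vs qn g = minn v r by rewrite /vs mk3_s inordK //; apply: leq_ltn_trans (geq_minl _ _) _.
have vh1 : vs qn h1 = v by rewrite /vs mk3_s.
have vh2 : vs qn h2 = r.-1 by rewrite /vs mk3_s inordK //; lia.
have vh3 : vs qn h3 = T by rewrite /vs mk3_s.
have rg : rk g = Sq q f + minn v r.
  rewrite (rk_mk3 qn) inordK; last by apply: leq_ltn_trans (geq_minl _ _) _.
  by rewrite big1 ?addn0.
have rh1 : rk h1 = Sq q f + v + RT by rewrite (rk_mk3 qn).
have rh2 : rk h2 = Sq q f + r.-1 + RT by rewrite (rk_mk3 qn) inordK //; lia.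
have rh3 : rk h3 = Sq q f + T + RT by rewrite (rk_mk3 qn).
have rtop : n * T = q * T + T + RT.
  rewrite -(rk_top n T) (rk_split _ qn) Sq_top; last exact: ltnW.
  by rewrite ffunE; congr (_ + _ + _); apply: eq_bigr => i _; rewrite ffunE.
have Sf : Sq q f <= q * T by rewrite -(Sq_top T (ltnW qn)); apply: Sq_le; exact: gtop_ge.
have lg : lowP q r g.
  apply/forallP => i; apply/andP; split; apply/implyP => hi.
  - by rewrite mk3_gt.
  - have e : i = s by apply: val_inj; exact/eqP.
    by rewrite e; move: vg; rewrite /vs => ->; exact: geq_minr.
have gF : g \in FC n T q r by rewrite inE lg.
have h1F : v < r -> h1 \in FC n T q r.
  move=> vr; rewrite inE; apply/orP; right; apply: (@upP_intro n T q r qn).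
    by move=> i hi; rewrite mk3_gt.
  by rewrite vh1 vr.
have h3F : h3 \in FC n T q r.
  rewrite inE; apply/orP; right; apply: (@upP_intro n T q r qn).
    by move=> i hi; rewrite mk3_gt.
  by rewrite vh3 eqxx orbT.
have lgf : glt g f.
  rewrite /glt; apply/andP; split; last by apply: contraNneq fF => <-.
  apply/gleP => i; rewrite ffunE; case: ifP => // iq; case: ifP => // iqq.
  have e : i = s by apply: val_inj; exact/eqP.
  rewrite e inordK; last by apply: leq_ltn_trans (geq_minl _ _) _.
  exact: geq_minl.
have lefh : forall b : 'I_T.+1, v <= b -> grid_le f (mk3 q f b ord_max).
  move=> b vb; apply/gleP => i; rewrite ffunE; case: ifP => // iq; case: ifP => iqq.
    have e : i = s by apply: val_inj; exact/eqP.
    by rewrite e.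
  by rewrite -ltnS ltn_ord.
have [s1 [s1a s1b s1c s1d _]] := ichain (gbot_le g).
have [s3 [s3a s3b s3c s3d _]] := ichain (gtop_ge h3).
have memL : forall x, x \in gbot n T :: s1 -> x \in FC n T q r.
  move=> x /s1d /andP[_ xg]; rewrite inE; apply/orP; left; exact: lowP_down xg lg.
have memH3 : forall x, x \in h3 :: s3 -> x \in FC n T q r.
  move=> x /s3d /andP[hx _]; rewrite inE; apply/orP; right.
  apply: (@upP_intro n T q r qn).
    move=> i hi; move/gleP: hx => /(_ i); rewrite mk3_gt //.
  have /gleP := hx => /(_ s); rewrite mk3_s => hs.
  apply/orP; right; apply/eqP; apply: anti_leq; rewrite hs andbT /vs -ltnS ltn_ord //.
have lf3 : glt f h3.
  rewrite /glt lefh //; apply: contraNneq fF => ->; exact: h3F.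
have so3 : sorted (@glt n T.+1) (h3 :: s3) := s3a.
have sz : forall M, size (gbot n T :: s1 ++ f :: M) = (rk g).+2 + size M.
  by move=> M; rewrite /= size_cat /= s1c rk_bot subn0 addnS !addSn.
case: (ltnP v r) => vr.
  have l12 : grid_le h1 h2.
    apply: mk3_le => //; rewrite inordK; last lia.
    by move: vr; rewrite /v /vs; case: (r) => // r' /=; rewrite ltnS.
  have [s2 [s2a s2b s2c s2d _]] := ichain l12.
  have memH1 : forall x, x \in h1 :: s2 -> x \in FC n T q r.
    move=> x /s2d /andP[hx xh]; rewrite inE; apply/orP; right.
    apply: (@upP_intro n T q r qn).
      move=> i hi; move/gleP: hx => /(_ i); rewrite mk3_gt //.
    have rT' : r.-1 < T.+1 by rewrite ltnS; apply: leq_trans (leq_pred r) (ltnW rT).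
    have /gleP := xh => /(_ s); rewrite mk3_s inordK // => hs.
    apply/orP; left; rewrite /vs.
    by apply: leq_ltn_trans hs _; rewrite ltn_predL; exact: leq_ltn_trans (leq0n v) vr.
  have lf1 : glt f h1.
    rewrite /glt lefh //; apply: contraNneq fF => ->; exact: h1F.
  have l23 : glt h2 h3.
    rewrite /glt mk3_le //; last by rewrite -ltnS ltn_ord.
    apply/eqP => e; have := vh2; rewrite e vh3 => h.
    by move: (leq_ltn_trans (leq_pred r) rT); rewrite -h ltnn.
  pose Lst := gbot n T :: s1 ++ f :: h1 :: s2 ++ h3 :: s3.
  exists (fun i : 'I_(q * T + r + 3) => nth f Lst i); apply: chain_copy.
  - rewrite /Lst /= cat_path s1b /= cat_path s2b /=.
    apply/andP; split; first exact: s1a.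
    rewrite lgf lf1 /=; apply/andP; split; first exact: s2a.
    by rewrite l23; exact: s3a.
  - rewrite /Lst sz /= size_cat /= s2c s3c rg rh1 rh2 rh3 rk_top rtop (minn_idPl (ltnW vr)).
    clear -vr Sf; lia.
  - move=> x; rewrite /Lst -cat_cons mem_cat => /orP[xL|]; first by rewrite setU1r // memL.
    rewrite inE => /orP[/eqP ->|]; first exact: setU11.
    rewrite -cat_cons mem_cat => /orP[xH|xH]; rewrite setU1r //.
      exact: memH1.
    exact: memH3.
pose Lst := gbot n T :: s1 ++ f :: h3 :: s3.
exists (fun i : 'I_(q * T + r + 3) => nth f Lst i); apply: chain_copy.
- rewrite /Lst /= cat_path s1b /=.
  apply/andP; split; first exact: s1a.
  by rewrite lgf lf3 /=; exact: s3a.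
- rewrite /Lst sz /= s3c rg rh3 rk_top rtop (minn_idPr vr).
  clear -vr Sf rT; lia.
- move=> x; rewrite /Lst -cat_cons mem_cat => /orP[xL|]; first by rewrite setU1r // memL.
  rewrite inE => /orP[/eqP ->|xH]; first exact: setU11.
  by rewrite setU1r // memH3.
Qed.

Lemma chain2 n T : embeds n T.+1 (chain_rel 2) ->
  exists F : {set grid n T.+1}, induced_saturated (chain_rel 2) F /\ #|F| <= 2 ^ 0.
Proof.
move=> _; exists [set gbot n T]; split; last by rewrite cards1.
split.
  move=> phi; apply: (@no_chain n T.+1 [set gbot n T] 2 (fun _ => 0) 0) => //.
  by move=> x y; rewrite !inE => /eqP -> /eqP ->; rewrite /glt eqxx andbF.
move=> f fF.
have fb : f != gbot n T by apply: contraNneq fF => ->; rewrite inE.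
exists (fun i : 'I_2 => nth f [:: gbot n T; f] i); apply: chain_copy => //.
- by rewrite /= andbT /glt gbot_le eq_sym fb.
- move=> x; rewrite !inE => /orP[->|/eqP ->]; first by rewrite orbT.
  by rewrite eqxx.
Qed.

Lemma chainK n T q r : 0 < T -> q < n -> r < T ->
  exists F : {set grid n T.+1},
    induced_saturated (chain_rel (q * T + r + 3)) F /\ #|F| <= 2 ^ (q * T + r + 1).
Proof.
move=> T0 qn rT; exists (FC n T q r); split; last exact: FC_card_bound.
split; [exact: FC_free | exact: FC_sat].
Qed.

Lemma PP_embeds n T k : 0 < T -> 1 < n -> k <= n -> embeds n T.+1 (antichain_rel k).
Proof.
move=> T0 n1 kn.
have L1 : 1 < n * T by rewrite (leq_trans n1) // leq_pmulr.
exists (fun i : 'I_k => PP n T i 1).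
have hi : forall i : 'I_k, i < n by move=> i; apply: leq_trans (ltn_ord i) kn.
have ord : forall i j : 'I_k, grid_le (PP n T i 1) (PP n T j 1) = antichain_rel k i j.
  move=> i j; rewrite /antichain_rel; case: (eqVneq i j) => [->|ne]; first exact: gle_refl.
  have ne' : val i != val j by [].
  exact: PP_incomp (hi i) (hi j) ne' (ltnSn 0) L1.
split; [|split].
- move=> i j e; apply/eqP; rewrite -[_ == _]/(antichain_rel k i j) -ord e gle_refl //.
- by move=> i; rewrite inE.
- exact: ord.
Qed.

Unset Implicit Arguments.

Theorem mainTheorem4 (k t : nat) (hk : 2 <= k) (ht : 2 <= t) :
  (* sat*([t]^n, C_k) <= 2^(k-2) whenever it is defined *)
  (forall n : nat, embeds n t (chain_rel k) ->
     exists F : {set grid n t},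
       induced_saturated (chain_rel k) F /\ #|F| <= 2 ^ (k - 2))
  /\
  (* sat*([t]^n, A_k) = Theta(n) *)
  (exists (a b N : nat), 0 < a /\ 0 < b /\
     forall n : nat, N <= n ->
       embeds n t (antichain_rel k) /\
       (exists F : {set grid n t},
          induced_saturated (antichain_rel k) F /\ #|F| <= b * n) /\
       (forall F : {set grid n t},
          induced_saturated (antichain_rel k) F -> n <= a * #|F|)).
Proof.
case: t ht => [//|T] ht.
have T0 : 0 < T by [].
split.
  move=> n emb.
  case: k hk emb => [//|[//|[|k0]]] hk emb.
    exact: chain2.
  have kb := embeds_chain_bound emb.
  pose q := k0 %/ T; pose r := k0 %% T.
  have ek : k0.+3 = q * T + r + 3 by rewrite /q /r -divn_eq addn3.
  have rT : r < T by rewrite /r ltn_pmod.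
  have qn : q < n.
    have : q * T <= k0 by rewrite /q leq_divM.
    move=> h; rewrite -(ltn_pmul2r T0); lia.
  have [F [HF cF]] := chainK T0 qn rT.
  exists F; rewrite ek; split => //.
  by apply: leq_trans cF _; rewrite leq_exp2l //; lia.
exists 1, (k.-1 * T.+1), k; split => //; split.
  by rewrite muln_gt0 andbT; lia.
move=> n kn.
have n1 : 1 < n by lia.
split; first exact: PP_embeds.
have ek : k = k.-1.+1 by lia.
split.
  exists (FA n T k.-1); rewrite ek; split.
    split; first by apply: FA_free; lia.
    by apply: FA_sat; lia.
  apply: leq_trans (FA_card n T k.-1) _.
  rewrite -mulnA leq_mul2l; apply/orP; right.
  rewrite mulSn; nia.
move=> F HF; have := sat_lower hk HF.
rewrite mul1n => h; apply: leq_trans h; apply: ltnW; rewrite ltnS leq_pmulr //.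
Qed.
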